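(* Let $p$ be a prime and $G$ a $p$-group of order $p^m$ with $|G/Z(G)|=p^3$. (1) If $G$ has no abelian maximal subgroup, then $$B_G(t)=\frac{1-p^{m-5}t}{(1-p^{m-2}t)(1-p^{m-3}t)}.$$ (2) If $G$ possesses an abelian maximal subgroup, then $$B_G(t)=\frac{1}{1-p^{m-3}t}\left(1+\frac{(p^{m-2}-p^{m-4})t}{1-p^{m-1}t}+\frac{(p^{m-2}-p^{m-3})t}{1-p^{m-2}t}\right).$$
   Context: For a finite group $G$ and $n\ge0$, let $G^{(n)}=\{(x_1,\dots,x_n)\in G^n: x_ix_j=x_jx_i\ \forall i,j\}$, on which $G$ acts by simultaneous conjugation; let $\beta_{G,n}$ be the number of orbits and $B_G(t)=\sum_{n\ge0}\beta_{G,n}t^n$, viewed as a rational function of $t$. *)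

(* Defs.v *)
From HB Require Import structures.
From mathcomp Require Import all_boot all_order all_algebra all_fingroup all_solvable.
Set Implicit Arguments. Unset Strict Implicit. Unset Printing Implicit Defensive.
Import GRing.Theory Num.Theory.

Local Open Scope group_scope.

Definition tconj (gT : finGroupType) (n : nat) (x : {ffun 'I_n -> gT}) (g : gT)
  : {ffun 'I_n -> gT} := [ffun i => x i ^ g].

Definition commuting_tuples (gT : finGroupType) (G : {set gT}) (n : nat)
  : {set {ffun 'I_n -> gT}} :=
  [set x : {ffun 'I_n -> gT} | [forall i, x i \in G] &&
                               [forall i, forall j, x i * x j == x j * x i]].

Definition tconj_orbit (gT : finGroupType) (G : {set gT}) (n : nat)
  (x : {ffun 'I_n -> gT}) : {set {ffun 'I_n -> gT}} :=
  [set tconj x g | g in G].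

Definition beta (gT : finGroupType) (G : {set gT}) (n : nat) : nat :=
  #|[set tconj_orbit G x | x in commuting_tuples G n]|.

Local Open Scope ring_scope.

Definition fps := nat -> rat.
Definition fps_add (a b : fps) : fps := fun n => a n + b n.
Definition fps_mul (a b : fps) : fps :=
  fun n => \sum_(i < n.+1) a i * b (n - i)%N.
Definition fps_of_poly (q : {poly rat}) : fps := fun n => q`_n.
(* the power series expansion of 1/(1 - a t) *)
Definition fps_geom (a : rat) : fps := fun n => a ^+ n.

Definition Bseries (gT : finGroupType) (G : {set gT}) : fps :=
  fun n => (beta G n)%:R.

Definition pz (p : nat) (k : int) : rat := (p%:R : rat) ^ k.

(* Main.v *)
Require Import Defs.
From HB Require Import structures.
From mathcomp Require Import all_boot all_order all_algebra all_fingroup all_solvable.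
From Stdlib Require Import FunctionalExtensionality.
From mathcomp Require Import zify ring.
Import GRing.Theory Num.Theory.

Module Part0.
Set Implicit Arguments. Unset Strict Implicit. Unset Printing Implicit Defensive.

Section Act.
Variables (gT : finGroupType) (n : nat).
Local Open Scope group_scope.

Lemma tconj1 : (fun x => @tconj gT n x 1) =1 id.
Proof. by move=> x; apply/ffunP=> i; rewrite ffunE conjg1. Qed.
Lemma tconjM : forall x, act_morph (@tconj gT n) x.
Proof. by move=> x a b; apply/ffunP=> i; rewrite !ffunE conjgM. Qed.
Definition tact := TotalAction tconj1 tconjM.

Lemma tactE x a : tact x a = tconj x a. Proof. by []. Qed.

Lemma ctP (H : {set gT}) (x : {ffun 'I_n -> gT}) : reflect ((forall i, x i \in H) /\ (forall i j, commute (x i) (x j)))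
   (x \in commuting_tuples H n).
Proof.
rewrite inE; apply: (iffP andP) => [[/forallP h1 /forallP h2]|[h1 h2]].
  by split=> // i j; apply/eqP; exact: (forallP (h2 i) j).
by split; [apply/forallP; exact: h1 | apply/forallP=> i; apply/forallP=> j; apply/eqP; exact: h2].
Qed.

Lemma ct_conj (G : {group gT}) x g : g \in G -> x \in commuting_tuples G n ->
  tconj x g \in commuting_tuples G n.
Proof.
move=> Gg /ctP[h1 h2]; apply/ctP; split=> [i|i j]; rewrite !ffunE; first by rewrite groupJ.
by rewrite /commute -!conjMg h2.
Qed.

Lemma acts_ct (G : {group gT}) : [acts G, on commuting_tuples G n | tact].
Proof.
apply/actsP=> g Gg x; rewrite tactE; apply/idP/idP; last exact: ct_conj.
move=> /(ct_conj (groupVr Gg)); rewrite -tactE -actM mulgV act1 //.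
Qed.

Definition fsum (H : {set gT}) := \sum_(x in commuting_tuples H n) #|'C_H[x | tact]|.

Lemma beta_fsum (G : {group gT}) : (beta G n * #|G| = fsum G)%N.
Proof.
have GactS := acts_ct G.
rewrite /fsum (set_partition_big _ (orbit_partition GactS)) -sum_nat_const /beta.
have -> : [set tconj_orbit G x | x in commuting_tuples G n] = orbit tact G @: commuting_tuples G n.
  by apply: eq_imset => x; apply/setP => y; rewrite /orbit.
apply: eq_bigr => _ /imsetP[x Sx ->].
rewrite -(card_orbit_stab tact G x) -sum_nat_const.
apply: eq_bigr => y /imsetP[a Ga ->].
by rewrite astab1_act -{2}(conjGid Ga) -conjIg cardJg.
Qed.
End Act.

End Part0.
Import Part0.

Module Part1.
Set Implicit Arguments. Unset Strict Implicit. Unset Printing Implicit Defensive.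
Local Open Scope group_scope.

Section Rec.
Variable gT : finGroupType.

Lemma conj_fix_cent (a g : gT) : (a ^ g == a) = (g \in 'C[a]).
Proof. by rewrite cent1E [a * g]conjgC (inj_eq (mulgI g)) eq_sym. Qed.

Definition tcons n (a : gT) (y : {ffun 'I_n -> gT}) : {ffun 'I_n.+1 -> gT} :=
  [ffun i => if unlift ord0 i is Some j then y j else a].
Definition ttail n (x : {ffun 'I_n.+1 -> gT}) : {ffun 'I_n -> gT} :=
  [ffun j => x (lift ord0 j)].

Lemma tcons0 n a (y : {ffun 'I_n -> gT}) : tcons a y ord0 = a.
Proof. by rewrite ffunE unlift_none. Qed.
Lemma tconsS n a (y : {ffun 'I_n -> gT}) j : tcons a y (lift ord0 j) = y j.
Proof. by rewrite ffunE liftK. Qed.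
Lemma ttail_cons n a (y : {ffun 'I_n -> gT}) : ttail (tcons a y) = y.
Proof. by apply/ffunP=> j; rewrite ffunE tconsS. Qed.
Lemma tcons_tail n (x : {ffun 'I_n.+1 -> gT}) : tcons (x ord0) (ttail x) = x.
Proof.
apply/ffunP=> i; case: (unliftP ord0 i) => [j ->|->]; first by rewrite tconsS ffunE.
by rewrite tcons0.
Qed.

Lemma tcons_ct n (H : {set gT}) a (y : {ffun 'I_n -> gT}) : a \in H ->
  (tcons a y \in commuting_tuples H n.+1) = (y \in commuting_tuples 'C_H[a] n).
Proof.
move=> Ha; apply/ctP/ctP => [[h1 h2]|[h1 h2]].
  split=> [j|i j]; last by have := h2 (lift ord0 i) (lift ord0 j); rewrite !tconsS.
  rewrite inE; apply/andP; split; first by have := h1 (lift ord0 j); rewrite tconsS.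
  rewrite cent1E; apply/eqP; have := h2 (lift ord0 j) ord0.
  by rewrite tconsS tcons0.
have hH j : y j \in H by have := h1 j; rewrite inE => /andP[].
have hC j : commute (y j) a by have := h1 j; rewrite inE => /andP[_ /cent1P].
split=> [i|i j].
  by case: (unliftP ord0 i) => [k ->|->]; rewrite ?tconsS ?tcons0.
case: (unliftP ord0 i) => [k ->|->]; case: (unliftP ord0 j) => [l ->|->];
  rewrite ?tconsS ?tcons0 //.
by apply: commute_sym.
Qed.

Lemma tcons_stab n (H : {set gT}) a (y : {ffun 'I_n -> gT}) :
  'C_H[tcons a y | tact gT n.+1] = 'C_('C_H[a])[y | tact gT n].
Proof.
have E m (x : {ffun 'I_m -> gT}) g : (g \in 'C[x | tact gT m]) = (tconj x g == x).
  by apply/astab1P/eqP.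
have E' m (x : {ffun 'I_m -> gT}) (K : {set gT}) g :
    (g \in 'C_K[x | tact gT m]) = (g \in K) && (tconj x g == x).
  by apply/setIP/andP => -[-> h]; rewrite ?E in h *.
apply/setP=> g; rewrite !E' in_setI -andbA; congr (_ && _).
apply/eqP/andP => [h|[h1 /eqP h2]].
  move/ffunP: h => h; have := h ord0; rewrite ffunE !tcons0 => h0.
  rewrite -conj_fix_cent h0 eqxx; split=> //; apply/eqP/ffunP=> j.
  by have := h (lift ord0 j); rewrite !ffunE liftK.
apply/ffunP=> i; rewrite ffunE.
case: (unliftP ord0 i) => [k ->|->]; rewrite ?tconsS ?tcons0.
  by move/ffunP: h2 => h2; have := h2 k; rewrite ffunE.
by apply/eqP; rewrite conj_fix_cent.
Qed.

Lemma fsum_rec n (H : {set gT}) :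
  fsum n.+1 H = (\sum_(a in H) fsum n ('C_H[a]))%N.
Proof.
rewrite /fsum (partition_big (fun x : {ffun 'I_n.+1 -> gT} => x ord0) (mem H)); last first.
  by move=> x /ctP[h _]; apply: h.
apply: eq_bigr => a Ha.
rewrite (reindex (tcons a)) /=; last first.
  exists (@ttail n) => [y _|x]; first exact: ttail_cons.
  by rewrite inE => /andP[_ /eqP <-]; exact: tcons_tail.
apply: eq_big => [y|y _]; first by rewrite tcons0 eqxx andbT tcons_ct.
by rewrite tcons_stab.
Qed.

Lemma fsum_abelian n (A : {group gT}) : abelian A -> fsum n A = (#|A| ^ n.+1)%N.
Proof.
move=> cA; rewrite /fsum.
have -> : commuting_tuples A n = [set x in ffun_on A].
  apply/setP=> x; rewrite [RHS]inE; apply/ctP/ffun_onP => [[h _] //|h]; split=> // i j.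
  exact: (centsP cA).
rewrite (eq_bigr (fun _ => #|A|)) ?sum_nat_const.
  by rewrite cardsE card_ffun_on card_ord expnS mulnC.
move=> x; rewrite inE => /ffun_onP h; suff -> : 'C_A[x | tact gT n] = A by [].
apply/setIidPl/subsetP=> g Ag; apply/astab1P/ffunP=> i; rewrite tactE ffunE.
by apply/conjg_fixP; rewrite -/(commute _ _) ; apply/commgP; apply: (centsP cA).
Qed.
End Rec.

End Part1.
Import Part1.

Module Part2.
Set Implicit Arguments. Unset Strict Implicit. Unset Printing Implicit Defensive.
Local Open Scope group_scope.

Lemma sum3 (T : finType) (Z M G : {set T}) (u v w : nat) :
  Z \subset M -> M \subset G ->
  (\sum_(a in G) (if a \in Z then u else if a \in M then v else w) =
   #|Z| * u + (#|M| - #|Z|) * v + (#|G| - #|M|) * w)%N.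
Proof.
move=> sZM sMG; have sZG := subset_trans sZM sMG.
rewrite (big_setID M) (big_setID Z) /= (setIidPr sMG) (setIidPr sZM).
congr (_ + _ + _).
- by rewrite -sum_nat_const; apply: eq_bigr => a ->.
- have -> : (#|M| - #|Z| = #|M :\: Z|)%N by rewrite cardsD (setIidPr sZM).
  rewrite -sum_nat_const; apply: eq_bigr => a.
  by rewrite inE => /andP[/negbTE -> ->].
- have -> : (#|G| - #|M| = #|G :\: M|)%N by rewrite cardsD (setIidPr sMG).
  rewrite -sum_nat_const; apply: eq_bigr => a.
  rewrite inE => /andP[/negbTE aM _]; rewrite aM.
  by case: ifP => // aZ; rewrite (subsetP sZM) in aM.
Qed.

Section Grp.
Variables (gT : finGroupType) (G : {group gT}) (p k : nat).
Hypotheses (pr : prime p) (pG : p.-group G) (cG : #|G| = (p ^ (k + 3))%N)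
  (cZ : #|'Z(G)| = (p ^ k)%N).

Let p1 : (1 < p)%N. Proof. exact: prime_gt1. Qed.

Lemma pcard (H : {group gT}) : H \subset G -> #|H| = (p ^ logn p #|H|)%N.
Proof. by move=> sHG; apply: card_pgroup (pgroupS sHG pG). Qed.

Lemma center_cent1 a : a \in G -> 'Z(G) \subset 'C_G[a].
Proof.
move=> Ga; apply/subsetP=> z /centerP[Gz cz]; rewrite inE Gz /=.
by apply/cent1P; apply: cz.
Qed.

Lemma cent1_G a : a \in 'Z(G) -> 'C_G[a] = G.
Proof.
move=> /centerP[Ga ca]; apply/setIidPl; rewrite sub_cent1; apply/centP.
exact: ca.
Qed.

Lemma noncentral a : a \in G -> a \notin 'Z(G) ->
  abelian 'C_G[a] /\ (#|'C_G[a]| = p ^ k.+1 \/ #|'C_G[a]| = p ^ k.+2)%N.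
Proof.
move=> Ga aZ; set C := 'C_G[a]%G.
have sCG : C \subset G := subcent1_sub a G.
have aC : a \in C by rewrite inE Ga cent1id.
have ZpC : 'Z(G) \proper C.
  by apply/properP; split; [exact: center_cent1 | exists a].
have CpG : C \proper G.
  apply/properP; split=> //.
  have : ~~ (G \subset 'C[a]).
    by rewrite sub_cent1; apply: contra aZ => h; apply/centerP; split=> //; apply/centP.
  by case/subsetPn=> g Gg gC; exists g => //; rewrite inE negb_and gC orbT.
have e1 := proper_card ZpC; have e2 := proper_card CpG.
rewrite cZ (pcard sCG) in e1; rewrite cG (pcard sCG) in e2.
rewrite ltn_exp2l // in e1; rewrite ltn_exp2l // in e2.
split; last first.
  rewrite (pcard sCG); case: (ltngtP (logn p #|C|) k.+2) => h.
  - by left; congr (_ ^ _)%N; lia.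
  - by lia.
  - by right; rewrite h.
set W := 'Z(C).
have sWC : W \subset C := center_sub C.
have ZpW : 'Z(G) \proper W.
  apply/properP; split.
    apply/subsetP=> z Zz; apply/centerP; split; first by rewrite (subsetP (proper_sub ZpC)).
    by move=> y Cy; case/centerP: Zz => _ cz; apply: cz; rewrite (subsetP sCG).
  exists a => //; apply/centerP; split=> // y; rewrite inE => /andP[_ /cent1P h].
  exact: commute_sym.
have e3 := proper_card ZpW.
have sWG : W \subset G := subset_trans sWC sCG.
rewrite cZ (pcard sWG) ltn_exp2l // in e3.
have L := Lagrange sWC.
rewrite -card_quotient in L; last exact: normal_norm (center_normal C).
rewrite (pcard sWG) (pcard sCG) in L.
have hW : (logn p #|W| <= logn p #|C|)%N.
  by rewrite -(leq_exp2l _ _ p1) -(pcard sWG) -(pcard sCG) subset_leq_card.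
have cQ : #|C / W| = (p ^ (logn p #|C| - logn p #|W|))%N.
  apply/eqP; rewrite -(eqn_pmul2l (_ : 0 < p ^ logn p #|W|)%N) ?expn_gt0 ?prime_gt0 // L -expnD subnKC //.
apply: cyclic_center_factor_abelian.
have e3' : (k < logn p #|W|)%N := e3.
have : (logn p #|C| - logn p #|W| = 0 \/ logn p #|C| - logn p #|W| = 1)%N by lia.
case=> h; rewrite h ?expn0 ?expn1 in cQ.
  have /eqP -> : (C / W) :==: 1 by rewrite trivg_card1 cQ.
  exact: cyclic1.
by apply: prime_cyclic; rewrite cQ.
Qed.

Lemma case1_cent a : ~ (exists M : {group gT}, maximal M G && abelian M) ->
  a \in G -> a \notin 'Z(G) -> abelian 'C_G[a] /\ #|'C_G[a]| = (p ^ k.+1)%N.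
Proof.
move=> noM Ga aZ; have [cC [h|h]] := noncentral Ga aZ; first by [].
case: noM; exists 'C_G[a]%G; rewrite cC andbT.
apply: p_index_maximal; first exact: subcent1_sub.
have L := Lagrange (subcent1_sub a G).
suff -> : #|G : 'C_G[a]| = p by [].
apply/eqP; rewrite -(eqn_pmul2l (_ : 0 < p ^ k.+2)%N) ?expn_gt0 ?prime_gt0 // -h L cG.
by rewrite h -expnSr addn3.
Qed.

Section Case2.
Variable M : {group gT}.
Hypotheses (Mmax : maximal M G) (cM : abelian M).

Let sMG : M \subset G. Proof. exact: proper_sub (maxgroupp Mmax). Qed.

Lemma cardM : #|M| = (p ^ k.+2)%N.
Proof.
have L := Lagrange sMG; rewrite (p_maximal_index pG Mmax) cG in L.
apply/eqP; rewrite -(eqn_pmul2r (prime_gt0 pr)) L -expnSr addn3 //.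
Qed.

Lemma cent_M a : a \in M -> a \notin 'Z(G) -> 'C_G[a] = M.
Proof.
move=> Ma aZ; have Ga := subsetP sMG a Ma.
have sMC : M \subset 'C_G[a].
  by rewrite subsetI sMG sub_cent1 (subsetP cM).
have [_ [h|h]] := noncentral Ga aZ.
  by have := subset_leq_card sMC; rewrite h cardM leq_exp2l //; lia.
by apply/eqP; rewrite eq_sym eqEcard sMC h cardM /= leqnn.
Qed.

Lemma Z_sub_M : 'Z(G) \subset M.
Proof.
have : ~~ (M \subset 'Z(G)).
  apply/negP => h; have := subset_leq_card h.
  by rewrite cardM cZ leq_exp2l //; lia.
case/subsetPn=> a Ma aZ; rewrite -(cent_M Ma aZ).
exact: center_cent1 (subsetP sMG a Ma).
Qed.

Lemma cent_notM a : a \in G -> a \notin M ->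
  abelian 'C_G[a] /\ #|'C_G[a]| = (p ^ k.+1)%N.
Proof.
move=> Ga aM; have aZ : a \notin 'Z(G) by apply: contra aM; apply: (subsetP Z_sub_M).
have [cC [h|h]] := noncentral Ga aZ; first by [].
exfalso; set C := 'C_G[a]%G.
have sCG : C \subset G := subcent1_sub a G.
have sI : M :&: C \subset 'Z(G).
  apply/subsetP=> y /setIP[My Cy]; apply/negPn/negP => yZ.
  have e := cent_M My yZ.
  have sCy : C \subset 'C_G[y] by rewrite subsetI sCG sub_cent1 (subsetP cC).
  have : C :==: 'C_G[y] by rewrite eqEcard sCy e cardM h /= leqnn.
  rewrite e => /eqP eCM.
  by move: aM; rewrite -eCM inE Ga cent1id.
have := mul_cardG M C; rewrite cardM h.
have l1 := subset_leq_card (mul_subG sMG sCG).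
have l2 := subset_leq_card sI.
rewrite cG in l1; rewrite cZ in l2.
move=> E; have : (p ^ k.+2 * p ^ k.+2 <= p ^ (k + 3) * p ^ k)%N.
  by rewrite E leq_mul.
by rewrite -!expnD leq_exp2l //; lia.
Qed.
End Case2.

End Grp.

End Part2.
Import Part2.

Module Part3.
Set Implicit Arguments. Unset Strict Implicit. Unset Printing Implicit Defensive.
Local Open Scope ring_scope.

Lemma pzE (p m j : nat) : (0 < p)%N -> pz p (m%:Z - j%:Z) = (p%:R : rat) ^+ m / (p%:R) ^+ j.
Proof.
move=> p0; have q0 : (p%:R : rat) != 0 by rewrite pnatr_eq0 -lt0n.
by rewrite /pz expfzDr // exprnN.
Qed.

Lemma pz5 (p m : nat) : pz p (m%:Z - 5) = pz p (m%:Z - 5%N%:Z).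
Proof. by []. Qed.

Lemma fps_geom_mulS b u n :
  fps_mul (fps_geom b) u n.+1 = b * fps_mul (fps_geom b) u n + u n.+1.
Proof.
rewrite /fps_mul big_ord_recl /= subn0 /fps_geom expr0 mul1r addrC; congr (_ + _).
rewrite big_distrr /=; apply: eq_bigr => i _.
by rewrite /bump /= add1n subSS exprS mulrA.
Qed.

Lemma fps_geom_mul0 b u : fps_mul (fps_geom b) u 0 = u 0.
Proof. by rewrite /fps_mul big_ord1 /fps_geom expr0 mul1r. Qed.

Lemma fps_mulC u v : fps_mul u v = fps_mul v u.
Proof.
apply: functional_extensionality => n; rewrite /fps_mul (reindex_inj rev_ord_inj) /=.
apply: eq_bigr => i _; rewrite mulrC subKn //; exact: leq_ord.
Qed.

Lemma fps_X_mulS c v n : fps_mul (fps_of_poly (c *: 'X)) v n.+1 = c * v n.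
Proof.
rewrite /fps_mul big_ord_recl /= /fps_of_poly coefZ coefX /= mulr0 mul0r add0r.
rewrite big_ord_recl /= coefZ coefX /= mulr1 subn1 /=.
rewrite big1 ?addr0 // => i _; rewrite coefZ coefX /= mulr0 mul0r //.
Qed.

Lemma fps_X_mul0 c v : fps_mul (fps_of_poly (c *: 'X)) v 0 = 0.
Proof. by rewrite /fps_mul big_ord1 /fps_of_poly coefZ coefX mulr0 mul0r. Qed.

Lemma fps_1X_mulS c v n : fps_mul (fps_of_poly (1 - c *: 'X)) v n.+1 = v n.+1 - c * v n.
Proof.
rewrite /fps_mul big_ord_recl /= /fps_of_poly coefB coefZ coefX coef1 /= mulr0 subr0 mul1r.
rewrite big_ord_recl /= coefB coefZ coefX coef1 /= mulr1 sub0r subn1 /= mulNr.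
rewrite big1 ?addr0 // => i _; rewrite coefB coefZ coefX coef1 /= mulr0 subr0 mul0r //.
Qed.

Lemma fps_1X_mul0 c v : fps_mul (fps_of_poly (1 - c *: 'X)) v 0 = v 0.
Proof. by rewrite /fps_mul big_ord1 /fps_of_poly coefB coefZ coefX coef1 mulr0 subr0 mul1r. Qed.

Lemma series1 (B : fps) a b c : B 0%N = 1 -> (forall n, B n.+1 = b * B n + (a - c) * a ^+ n) ->
  B = fps_mul (fps_of_poly (1 - c *: 'X)) (fps_mul (fps_geom a) (fps_geom b)).
Proof.
move=> B0 BS; rewrite [fps_mul (fps_geom a) _]fps_mulC.
set h := fps_mul (fps_geom b) (fps_geom a).
have hS n : h n.+1 = b * h n + a ^+ n.+1 by rewrite /h fps_geom_mulS.
have h0 : h 0%N = 1 by rewrite /h fps_geom_mul0 /fps_geom expr0.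
set s := fps_mul _ h.
have s0 : s 0%N = 1 by rewrite /s fps_1X_mul0.
have sS n : s n.+1 = b * s n + (a - c) * a ^+ n.
  rewrite /s !fps_1X_mulS; case: n => [|n].
    by rewrite fps_1X_mul0 hS h0 expr1; ring.
  rewrite fps_1X_mulS !hS !exprS; ring.
apply: functional_extensionality; elim=> [|n IH]; first by rewrite B0 s0.
by rewrite BS sS IH.
Qed.

Lemma series2 (B : fps) b a1 d1 a2 d2 : B 0%N = 1 ->
  (forall n, B n.+1 = b * B n + d1 * a1 ^+ n + d2 * a2 ^+ n) ->
  B = fps_mul (fps_geom b) (fps_add (fps_of_poly 1)
         (fps_add (fps_mul (fps_of_poly (d1 *: 'X)) (fps_geom a1))
                  (fps_mul (fps_of_poly (d2 *: 'X)) (fps_geom a2)))).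
Proof.
move=> B0 BS; apply: functional_extensionality; elim=> [|n IH].
  by rewrite B0 fps_geom_mul0 /fps_add !fps_X_mul0 /fps_of_poly coef1 /= !addr0.
rewrite BS fps_geom_mulS IH /fps_add !fps_X_mulS /fps_of_poly coef1 /= add0r /fps_geom.
by rewrite addrA.
Qed.

End Part3.
Import Part3.

Module Part5.
Set Implicit Arguments. Unset Strict Implicit. Unset Printing Implicit Defensive.

Lemma fsum0 (gT : finGroupType) (H : {group gT}) : fsum 0 H = #|H|.
Proof.
rewrite /fsum.
have -> : commuting_tuples H 0 = setT.
  by apply/setP=> x; rewrite in_setT; apply/ctP; split=> -[].
rewrite (eq_bigr (fun _ => #|H|)) ?sum_nat_const ?cardsT ?card_ffun ?card_ord ?mul1n //.
move=> x _; suff -> : ('C_H[x | tact gT 0] = H)%g by [].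
by apply/setIidPl/subsetP=> g Hg; apply/astab1P/ffunP=> -[].
Qed.

Local Open Scope group_scope.
Lemma rec_gen (gT : finGroupType) (G M : {group gT}) n X Y :
  ('Z(G) \subset M)%g -> M \subset G ->
  (forall a, a \in M -> a \notin 'Z(G) -> fsum n 'C_G[a]%g = X) ->
  (forall a, a \in G -> a \notin M -> fsum n 'C_G[a]%g = Y) ->
  fsum n.+1 G = (#|'Z(G)| * fsum n G + (#|M| - #|'Z(G)|) * X + (#|G| - #|M|) * Y)%N.
Proof.
move=> sZM sMG hX hY; rewrite fsum_rec -sum3 //; apply: eq_bigr => a Ga.
case: ifP => aZ; first by rewrite cent1_G.
by case: ifP => aM; [rewrite hX ?aZ | rewrite hY ?aM].
Qed.

End Part5.
Import Part5.
Local Open Scope ring_scope.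

Lemma natB' (a b : nat) : (b <= a)%N -> ((a - b)%N%:R : rat) = a%:R - b%:R.
Proof. exact: natrB. Qed.

Theorem theorem8p3 (gT : finGroupType) (G : {group gT}) (p m : nat) :
  prime p -> (p.-group G)%g -> #|G| = (p ^ m)%N -> #|(G / 'Z(G))%g| = (p ^ 3)%N ->
  ((~ (exists M : {group gT}, maximal M G && abelian M)) ->
     Bseries G =
     fps_mul (fps_of_poly (1 - (pz p (m%:Z - 5)) *: 'X))
       (fps_mul (fps_geom (pz p (m%:Z - 2))) (fps_geom (pz p (m%:Z - 3)))))
  /\
  ((exists M : {group gT}, maximal M G && abelian M) ->
     Bseries G =
     fps_mul (fps_geom (pz p (m%:Z - 3)))
       (fps_add (fps_of_poly 1)
         (fps_add
           (fps_mul (fps_of_poly ((pz p (m%:Z - 2) - pz p (m%:Z - 4)) *: 'X))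
                    (fps_geom (pz p (m%:Z - 1))))
           (fps_mul (fps_of_poly ((pz p (m%:Z - 2) - pz p (m%:Z - 3)) *: 'X))
                    (fps_geom (pz p (m%:Z - 2))))))).
Proof.
move=> pr pG cG cQ.
have p0 : (0 < p)%N := prime_gt0 pr.
have p1 : (1 < p)%N := prime_gt1 pr.
have LZ := Lagrange (center_sub G).
rewrite -card_quotient ?cQ in LZ; last exact: normal_norm (center_normal G).
rewrite cG in LZ.
have m3 : (3 <= m)%N.
  by rewrite -(leq_exp2l _ _ p1) -LZ leq_pmull // cardG_gt0.
have [k mk] : exists k, m = (k + 3)%N by exists (m - 3)%N; rewrite subnK.
subst m.
have cZ : #|'Z(G)%g| = (p ^ k)%N.
  by apply/eqP; rewrite -(eqn_pmul2r (_ : 0 < p ^ 3)%N) ?expn_gt0 ?p0 // LZ expnD.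
have hb n : (beta G n * p ^ (k + 3) = fsum n G)%N by rewrite -cG beta_fsum.
set q : rat := p%:R.
have q0 : q != 0 by rewrite pnatr_eq0 -lt0n.
have pzq j : pz p ((k + 3)%N%:Z - j%:Z) = q ^+ (k + 3) / q ^+ j by apply: pzE.
have B0 : Bseries G 0%N = 1.
  have := hb 0%N; rewrite fsum0 cG -{2}(mul1n (p ^ (k + 3))%N) => /eqP.
  by rewrite eqn_pmul2r ?expn_gt0 ?p0 // /Bseries => /eqP ->.
have kk : (p ^ k <= p ^ (k + 3))%N by rewrite leq_exp2l // leq_addr.
have kk2 : (p ^ k.+2 <= p ^ (k + 3))%N by rewrite leq_exp2l //; lia.
have kk3 : (p ^ k <= p ^ k.+2)%N by rewrite leq_exp2l //; lia.
set Q := q ^+ k.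
have Q0 : Q != 0 by rewrite expf_neq0.
have e3 : q ^+ (k + 3) = Q * q ^+ 3 by rewrite exprD.
split.
  move=> noM.
  have rec n : fsum n.+1 G = (p ^ k * fsum n G + (p ^ (k + 3) - p ^ k) * (p ^ k.+1) ^ n.+1)%N.
    rewrite (@rec_gen _ G 'Z(G)%G n 0 ((p ^ k.+1) ^ n.+1)) ?center_sub //.
    - by rewrite subnn mul0n addn0 cZ cG.
    - by move=> a ->.
    move=> a Ga aZ; have [cC hC] := case1_cent pr pG cG cZ noM Ga aZ.
    by rewrite (fsum_abelian n cC) hC.
  apply: series1 => // n.
  rewrite (pzq 3%N) (pzq 2%N) (pzq 5%N) /Bseries.
  have := rec n; rewrite -!hb => /(congr1 (fun x : nat => x%:R : rat)).
  rewrite !(natrD, natrM, natB', natrX) // -/q -/Q e3 => H.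
  have -> : Q * q ^+ 3 / q ^+ 2 = Q * q by field.
  apply: (mulIf (_ : Q * q ^+ 3 != 0)); first by rewrite mulf_neq0 ?expf_neq0.
  by rewrite H [q ^+ k.+1]exprSr -/Q [(Q * q) ^+ n.+1]exprSr; field.
move=> [M /andP[Mmax cM]].
have rec n : fsum n.+1 G = (p ^ k * fsum n G + (p ^ k.+2 - p ^ k) * (p ^ k.+2) ^ n.+1
     + (p ^ (k + 3) - p ^ k.+2) * (p ^ k.+1) ^ n.+1)%N.
  rewrite (@rec_gen _ G M n ((p ^ k.+2) ^ n.+1) ((p ^ k.+1) ^ n.+1)).
  - by rewrite cZ cG (cardM pr pG cG Mmax).
  - exact: Z_sub_M pr pG cG cZ M Mmax cM.
  - exact: proper_sub (maxgroupp Mmax).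
  - move=> a Ma aZ; rewrite (cent_M pr pG cG cZ Mmax cM Ma aZ).
    by rewrite (fsum_abelian n cM) (cardM pr pG cG Mmax).
  move=> a Ga aM; have [cC hC] := cent_notM pr pG cG cZ Mmax cM Ga aM.
  by rewrite (fsum_abelian n cC) hC.
apply: series2 => // n.
rewrite (pzq 3%N) (pzq 2%N) (pzq 4%N) (pzq 1%N) /Bseries.
have := rec n; rewrite -!hb => /(congr1 (fun x : nat => x%:R : rat)).
rewrite !(natrD, natrM, natB', natrX) // -/q -/Q e3 => H.
have -> : Q * q ^+ 3 / q ^+ 2 = Q * q by field.
have -> : Q * q ^+ 3 / q ^+ 1 = Q * q ^+ 2 by field.
apply: (mulIf (_ : Q * q ^+ 3 != 0)); first by rewrite mulf_neq0 ?expf_neq0.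
have e2 : q ^+ k.+2 = Q * q ^+ 2 by rewrite -addn2 exprD.
have e1 : q ^+ k.+1 = Q * q by rewrite exprSr.
by rewrite H e2 e1 [(Q * q ^+ 2) ^+ n.+1]exprSr [(Q * q) ^+ n.+1]exprSr; field.
Qed.
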